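(* Let $J\in\{1/2,1,3/2,\dots\}$, $M=2J$, $\Delta>M$, let $\mathcal{G}=(\mathcal{V},\mathcal{E})$ be a finite connected graph and $x,y\in\mathcal{V}$ distinct. Then, as operators on $\bigotimes_{z\in\mathcal{V}}\mathbb{C}^{M+1}$, $$-\frac{2J}{\Delta}(J^2-S_x^3S_y^3)\le-\frac{1}{2\Delta}(S_x^+S_y^-+S_x^-S_y^+)\le\frac{2J}{\Delta}(J^2-S_x^3S_y^3)$$ and $$\Big(1-\frac{2J}{\Delta}\Big)(J^2-S_x^3S_y^3)\le h_{xy}\le\Big(1+\frac{2J}{\Delta}\Big)(J^2-S_x^3S_y^3)\le\frac{M}{2}\Big(1+\frac{M}{\Delta}\Big)(\mathcal{N}_x^{loc}+\mathcal{N}_y^{loc}).$$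
   Context: $\mathbb{C}^{M+1}$ has orthonormal basis $\{\delta_j\}_{j=-J}^{J}$; $S^-\delta_j=\sqrt{J(J+1)-j(j-1)}\,\delta_{j-1}$ ($j>-J$), $S^-\delta_{-J}=0$; $S^+\delta_j=\sqrt{J(J+1)-j(j+1)}\,\delta_{j+1}$ ($j<J$), $S^+\delta_J=0$; $S^3\delta_j=j\delta_j$. For an operator $A$ on $\mathbb{C}^{M+1}$, $A_x$ acts as $A$ on the tensor factor at $x$ and as identity elsewhere. $h_{xy}=J^2-\frac{1}{2\Delta}(S_x^+S_y^-+S_x^-S_y^+)-S_x^3S_y^3$ and $\mathcal{N}^{loc}=J-S^3$ (local particle number operator). *)

(* Defs.v *)
From HB Require Import structures.
From mathcomp Require Import all_boot all_order all_algebra.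
From mathcomp.real_closed Require Import complex.
From mathcomp Require Import reals.
Set Implicit Arguments. Unset Strict Implicit. Unset Printing Implicit Defensive.
Import Order.TTheory GRing.Theory Num.Theory.
Local Open Scope ring_scope.

Section Spin.
Variable R : realType.
Local Notation C := (R[i]).

(* A local spin value J = M/2; basis vector delta_j of C^(M+1), j = -J..J, is
   indexed by k : 'I_(M+1) with j = k - J. *)
Definition spinJ (M : nat) : C := ((M%:R / 2)%:C)%C.
Definition jval (M : nat) (k : 'I_M.+1) : C := k%:R - spinJ M.

(* Local operators as matrices: A k l = <delta_k, A delta_l>. *)
Definition Sminus (M : nat) : 'M[C]_(M.+1) :=
  \matrix_(k, l) (if k.+1 == l :> nat then
     sqrtC (spinJ M * (spinJ M + 1) - jval l * (jval l - 1)) else 0).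
Definition Splus (M : nat) : 'M[C]_(M.+1) :=
  \matrix_(k, l) (if k == l.+1 :> nat then
     sqrtC (spinJ M * (spinJ M + 1) - jval l * (jval l + 1)) else 0).
Definition S3 (M : nat) : 'M[C]_(M.+1) :=
  \matrix_(k, l) (if k == l then jval k else 0).
Definition Nloc (M : nat) : 'M[C]_(M.+1) := (spinJ M)%:M - S3 M.

(* Operators on the tensor product  \bigotimes_{z in V} C^(M+1), written in the
   product basis indexed by configurations sigma : V -> 'I_(M+1). *)
Definition cfg (V : finType) (M : nat) := {ffun V -> 'I_M.+1}.
Definition Op (V : finType) (M : nat) := cfg V M -> cfg V M -> C.

Definition loc (V : finType) (M : nat) (x : V) (A : 'M[C]_(M.+1)) : Op V M :=
  fun s t => A (s x) (t x) * (([forall z, (z != x) ==> (s z == t z)]) : bool)%:R.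

Definition op_id (V : finType) (M : nat) : Op V M := fun s t => ((s == t) : bool)%:R.
Definition op_mul (V : finType) (M : nat) (A B : Op V M) : Op V M :=
  fun s t => \sum_(r : cfg V M) A s r * B r t.
Definition op_add (V : finType) (M : nat) (A B : Op V M) : Op V M :=
  fun s t => A s t + B s t.
Definition op_scale (V : finType) (M : nat) (a : C) (A : Op V M) : Op V M :=
  fun s t => a * A s t.
Definition op_sub (V : finType) (M : nat) (A B : Op V M) : Op V M :=
  fun s t => A s t - B s t.

Definition psd (V : finType) (M : nat) (A : Op V M) : Prop :=
  forall v : cfg V M -> C,
    0 <= \sum_(s : cfg V M) \sum_(t : cfg V M) (v s)^* * A s t * v t.
Definition op_le (V : finType) (M : nat) (A B : Op V M) : Prop := psd (op_sub B A).

Definition Zxy (V : finType) (M : nat) (x y : V) : Op V M :=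
  op_sub (op_scale (spinJ M ^+ 2) (@op_id V M))
         (op_mul (loc x (S3 M)) (loc y (S3 M))).
Definition flip (V : finType) (M : nat) (x y : V) : Op V M :=
  op_add (op_mul (loc x (Splus M)) (loc y (Sminus M)))
         (op_mul (loc x (Sminus M)) (loc y (Splus M))).
Definition hxy (V : finType) (M : nat) (Delta : R) (x y : V) : Op V M :=
  op_sub (op_sub (op_scale (spinJ M ^+ 2) (@op_id V M))
                 (op_scale (1 / (2 * (Delta%:C)%C)) (flip x y)))
         (op_mul (loc x (S3 M)) (loc y (S3 M))).

End Spin.

Definition connected_graph (V : finType) (e : rel V) : Prop :=
  symmetric e /\ irreflexive e /\ (forall u v : V, connect e u v).

(* Main.v *)
Require Import Defs.
From HB Require Import structures.
From mathcomp Require Import all_boot all_order all_algebra.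
From mathcomp.real_closed Require Import complex.
From mathcomp Require Import reals.
From mathcomp Require Import ring lra zify.
Import Order.TTheory GRing.Theory Num.Theory.
Local Open Scope ring_scope.

Section H.
Variable R : realType.
Local Notation C := (R[i]).
Variables (V : finType) (M : nat).

Lemma schur (A : Op R V M) (d : cfg V M -> C) (F : Op R V M) (sg : C) :
  (sg == 1) || (sg == -1) ->
  (forall s t, A s t = (s == t)%:R * d s + sg * F s t) ->
  (forall s t, 0 <= F s t) -> (forall s t, F s t = F t s) ->
  (forall s, \sum_t F s t <= d s) -> psd A.
Proof.
move=> Hsg HA HF0 HFs Hrow v.
set n := fun s => (v s)^* * v s.
set S := \sum_s \sum_t F s t * ((v s)^* * v t).
have EQ : \sum_s \sum_t (v s)^* * A s t * v t = \sum_s d s * n s + sg * S.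
  rewrite /S mulr_sumr -big_split /=; apply: eq_bigr => s _.
  rewrite (eq_bigr (fun t => (s==t)%:R * (d s * ((v s)^* * v t)) + sg * (F s t * ((v s)^* * v t)))); last by move=> t _; rewrite HA; ring.
  rewrite big_split /= -mulr_sumr (bigD1 s) //= eqxx mul1r big1 ?addr0 // => t.
  by rewrite eq_sym => /negbTE ->; rewrite mul0r.
set W := \sum_s \sum_t F s t * (((v s + sg * v t)^*) * (v s + sg * v t)).
have W0 : 0 <= W.
  apply: sumr_ge0 => s _; apply: sumr_ge0 => t _; apply: mulr_ge0 => //.
  by rewrite mulrC mul_conjC_ge0.
have EW : W = 2 * (\sum_s (\sum_t F s t) * n s) + 2 * sg * S.
  have E1 : forall s t, F s t * (((v s + sg * v t)^*) * (v s + sg * v t))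
     = F s t * n s + F s t * n t + sg * (F s t * ((v s)^* * v t)) + sg * (F t s * ((v t)^* * v s)).
    move=> s t; rewrite /n -HFs; case/orP: Hsg => /eqP ->;
    rewrite ?rmorphD ?rmorphB ?rmorphN ?rmorphM ?conjC1 ?mul1r ?mulN1r; ring.
  rewrite /W.
  under eq_bigr => s _ do under eq_bigr => t _ do rewrite E1.
  rewrite /S.
  have X1 : \sum_s \sum_t F s t * n t = \sum_s \sum_t F s t * n s.
    by rewrite exchange_big /=; apply: eq_bigr => s _; apply: eq_bigr => t _; rewrite HFs.
  have X2 : \sum_s \sum_t sg * (F t s * ((v t)^* * v s)) = \sum_s \sum_t sg * (F s t * ((v s)^* * v t)).
    by rewrite exchange_big.
  under eq_bigr => s _ do rewrite !big_split /=.
  rewrite !big_split /= X1 X2.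
  under [X in _ + _ + X]eq_bigr => s _ do rewrite -mulr_sumr.
  rewrite -mulr_sumr.
  under [X in _ + _ + X + _]eq_bigr => s _ do rewrite -mulr_sumr.
  rewrite -mulr_sumr.
  under [X in _ = _ * X + _]eq_bigr => s _ do rewrite mulr_suml.
  ring.

rewrite EQ.
have P : 0 <= \sum_s (d s - \sum_t F s t) * n s.
  apply: sumr_ge0 => s _; apply: mulr_ge0; first by rewrite subr_ge0.
  by rewrite /n mulrC mul_conjC_ge0.
have : 0 <= 2 * (\sum_s d s * n s + sg * S).
  have -> : 2 * (\sum_s d s * n s + sg * S) = W + 2 * \sum_s (d s - \sum_t F s t) * n s.
    rewrite EW; under [X in _ = _ + _ * X]eq_bigr do rewrite mulrBl.
    rewrite sumrB; ring.
  by apply: addr_ge0 => //; apply: mulr_ge0.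
by rewrite pmulr_rge0 // ltr0n.
Qed.
End H.

Section H2.
Variable R : realType.
Local Notation C := (R[i]).
Variables (V : finType) (M : nat) (x y : V).
Hypothesis hxy : x != y.

Definition agree2 (s t : cfg V M) : bool :=
  [forall z, ((z != x) && (z != y)) ==> (s z == t z)].

Lemma agree2C s t : agree2 s t = agree2 t s.
Proof.
by apply/forallP/forallP => H z; apply/implyP => /(implyP (H z)); rewrite eq_sym.
Qed.

Lemma eq_cfg2 (s t : cfg V M) :
  [&& s x == t x, s y == t y & agree2 s t] = (s == t).
Proof.
apply/and3P/eqP => [[/eqP e1 /eqP e2 /forallP H]|->]; last first.
  by split=> //; apply/forallP => z; apply/implyP.
apply/ffunP => z; case: (eqVneq z x) => [->//|nx]; case: (eqVneq z y) => [->//|ny].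
by apply/eqP/(implyP (H z)); rewrite nx ny.
Qed.

Lemma mul_loc (A B : 'M[C]_(M.+1)) s t :
  op_mul (loc x A) (loc y B) s t = A (s x) (t x) * B (s y) (t y) * (agree2 s t)%:R.
Proof.
rewrite /op_mul /loc.
case: (boolP (agree2 s t)) => Hag.
  pose r0 : cfg V M := [ffun z => if z == x then t x else s z].
  rewrite (bigD1 r0) //= big1 ?addr0.
    have -> : [forall z, (z != x) ==> (s z == r0 z)].
      by apply/forallP => z; apply/implyP; rewrite /r0 ffunE => /negbTE ->.
    have -> : [forall z, (z != y) ==> (r0 z == t z)].
      apply/forallP => z; apply/implyP; rewrite /r0 ffunE => ny.
      case: (eqVneq z x) => [->//|nx]; exact: (implyP (forallP Hag z)) (introT andP (conj nx ny)).
    rewrite /r0 !ffunE eqxx eq_sym (negbTE hxy) mulr1 mulr1; ring.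
  move=> r nr.
  case: (boolP [forall z, (z != x) ==> (s z == r z)]) => H1; last by rewrite mulr0 mul0r.
  case: (boolP [forall z, (z != y) ==> (r z == t z)]) => H2; last by rewrite !mulr0.
  exfalso; move/negP: nr; apply; apply/eqP/ffunP => z; rewrite /r0 ffunE.
  case: (eqVneq z x) => [->|nx]; last by apply/esym/eqP; exact: (implyP (forallP H1 z) nx).
  by apply/eqP; exact: (implyP (forallP H2 x) hxy).
rewrite mulr0 big1 // => r _.
case: (boolP [forall z, (z != x) ==> (s z == r z)]) => H1; last by rewrite mulr0 mul0r.
case: (boolP [forall z, (z != y) ==> (r z == t z)]) => H2; last by rewrite !mulr0.
exfalso; move/negP: Hag; apply; apply/forallP => z; apply/implyP => /andP [nx ny].
by rewrite (eqP (implyP (forallP H1 z) nx)) (implyP (forallP H2 z) ny).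
Qed.

Lemma loc_diag (A : 'M[C]_(M.+1)) (a : 'I_M.+1 -> C) (z : V) (s t : cfg V M) :
  (forall k l, A k l = (k == l)%:R * a k) ->
  loc z A s t = (s == t)%:R * a (s z).
Proof.
move=> HA; rewrite /loc HA.
case: (eqVneq s t) => [->|nst].
  have -> : [forall z0, (z0 != z) ==> (t z0 == t z0)] by apply/forallP => w; apply/implyP.
  by rewrite !eqxx mulr1.
case: (eqVneq (s z) (t z)) => e; last by rewrite !mul0r.
case: (boolP [forall z0, (z0 != z) ==> (s z0 == t z0)]) => H; last by rewrite mulr0 mul0r.
exfalso; move/eqP: nst; apply; apply/ffunP => w.
case: (eqVneq w z) => [->//|nw]; apply/eqP; exact: (implyP (forallP H w) nw).
Qed.

Definition upd (s : cfg V M) (k l : 'I_M.+1) : cfg V M :=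
  [ffun z => if z == x then k else if z == y then l else s z].

Lemma sum_agree2 (s : cfg V M) (f : 'I_M.+1 -> 'I_M.+1 -> C) :
  \sum_(t : cfg V M) f (t x) (t y) * (agree2 s t)%:R = \sum_k \sum_l f k l.
Proof.
have E : forall t : cfg V M, f (t x) (t y) * (agree2 s t)%:R =
    \sum_k \sum_l (t == upd s k l)%:R * f k l.
  move=> t; case: (boolP (agree2 s t)) => Hag.
    rewrite (bigD1 (t x)) //= (bigD1 (t y)) //= big1 ?addr0; last first.
      move=> l nl; case: (eqVneq t (upd s (t x) l)) => [e|]; last by rewrite mul0r.
      exfalso; move/eqP: nl; apply; rewrite e /upd ffunE [y == x]eq_sym (negbTE hxy) eqxx //.
    rewrite big1 ?addr0; last first.
      move=> k nk; rewrite big1 // => l _; case: (eqVneq t (upd s k l)) => [e|]; last by rewrite mul0r.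
      exfalso; move/eqP: nk; apply; rewrite e /upd ffunE eqxx //.
    have -> : t == upd s (t x) (t y).
      apply/eqP/ffunP => z; rewrite /upd ffunE.
      case: (eqVneq z x) => [->//|nx]; case: (eqVneq z y) => [->//|ny].
      by apply/esym/eqP/(implyP (forallP Hag z)); rewrite nx ny.
    by rewrite mul1r mulr1.
  rewrite mulr0 big1 // => k _; rewrite big1 // => l _.
  case: (eqVneq t (upd s k l)) => [e|]; last by rewrite mul0r.
  exfalso; move/negP: Hag; apply; apply/forallP => z; apply/implyP => /andP [nx ny].
  by rewrite e /upd ffunE (negbTE nx) (negbTE ny).
rewrite (eq_bigr _ (fun t _ => E t)) exchange_big /=; apply: eq_bigr => k _.
rewrite exchange_big /=; apply: eq_bigr => l _.
rewrite (bigD1 (upd s k l)) //= eqxx mul1r big1 ?addr0 // => t /negbTE ->.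
by rewrite mul0r.
Qed.
End H2.

Section H3.
Variable R : realType.
Local Notation C := (R[i]).
Variable M : nat.

Lemma spinJE : spinJ R M = M%:R / 2.
Proof. by rewrite /spinJ rmorphM /= fmorphV /= !rmorph_nat. Qed.

Lemma jvalE (k : 'I_M.+1) : jval R k = k%:R - M%:R / 2 :> C.
Proof. by rewrite /jval spinJE. Qed.

Lemma SminusE (k l : 'I_M.+1) :
  Sminus R M k l = if k.+1 == l :> nat then sqrtC ((l * (M.+1 - l))%:R) else 0.
Proof.
rewrite /Sminus mxE; case: ifP => // _; congr sqrtC.
rewrite spinJE jvalE natrM natrB; last by rewrite ltnW // ltn_ord.
rewrite -?[M.+1]addn1 -?[l.+1]addn1 ?natrD; by field.
Qed.

Lemma SplusE (k l : 'I_M.+1) :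
  Splus R M k l = if k == l.+1 :> nat then sqrtC ((l.+1 * (M - l))%:R) else 0.
Proof.
rewrite /Splus mxE; case: ifP => // _; congr sqrtC.
rewrite spinJE jvalE natrM natrB; last by rewrite -ltnS ltn_ord.
rewrite -?[M.+1]addn1 -?[l.+1]addn1 ?natrD; by field.
Qed.

Lemma Splus_Sminus (a b : 'I_M.+1) : Splus R M a b = Sminus R M b a.
Proof.
rewrite SplusE SminusE eq_sym; case: eqP => // e; congr sqrtC; congr _%:R.
by rewrite -e subSS mulnC.
Qed.

Lemma Splus_ge0 a b : 0 <= Splus R M a b.
Proof. by rewrite SplusE; case: ifP => // _; rewrite sqrtC_ge0 ler0n. Qed.
Lemma Sminus_ge0 a b : 0 <= Sminus R M a b.
Proof. by rewrite SminusE; case: ifP => // _; rewrite sqrtC_ge0 ler0n. Qed.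

Lemma rowSplus (a : 'I_M.+1) :
  \sum_k Splus R M a k = sqrtC ((a * (M.+1 - a))%:R).
Proof.
under eq_bigr do rewrite SplusE.
case Ea: (nat_of_ord a) => [|a'].
  by rewrite big1 ?sqrtC0 // => k _.
have Ha' : (a' < M.+1)%N by have := ltn_ord a; rewrite Ea; lia.
rewrite (bigD1 (Ordinal Ha')) //= eqxx big1 ?addr0.
  by rewrite subSS mulnC.
move=> k nk; case: ifP => // /eqP [] e.
by move: nk; rewrite (_ : k = Ordinal Ha') ?eqxx //; apply: val_inj.
Qed.

Lemma rowSminus (b : 'I_M.+1) :
  \sum_k Sminus R M b k = sqrtC ((b.+1 * (M - b))%:R).
Proof.
under eq_bigr do rewrite SminusE.
case: (ltnP b M) => Hb.
  have Hb' : (b.+1 < M.+1)%N by [].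
  rewrite (bigD1 (Ordinal Hb')) //= eqxx big1 ?addr0 //.
  move=> k nk; case: ifP => // /eqP e.
  by move: nk; rewrite (_ : k = Ordinal Hb') ?eqxx //; apply: val_inj.
have -> : (M - b = 0)%N by apply/eqP; rewrite subn_eq0.
rewrite muln0 sqrtC0 big1 // => k _; case: ifP => // /eqP e.
have := ltn_ord k; rewrite -e ltnS => H; have := leq_trans H Hb.
by rewrite ltnn.
Qed.

Lemma natbound (a b : nat) : (a <= M)%N -> (b <= M)%N ->
  (a * (M.+1 - a) * (b.+1 * (M - b)) <= (M * (a * (M - b))) ^ 2)%N.
Proof.
move=> Ha Hb.
case: (posnP a) => [->|a0]; first by rewrite !mul0n.
case: (posnP (M - b)) => [->|mb0]; first by rewrite !muln0.
set u := (a * (M - b))%N.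
have u1 : (1 <= u)%N by rewrite muln_gt0 a0 mb0.
have E : (a * (M.+1 - a) * (b.+1 * (M - b)) = u * ((M.+1 - a) * b.+1))%N.
  by rewrite /u; ring.
rewrite E.
have h1 : (M.+1 - a <= M)%N by lia.
have h2 : (b.+1 <= M)%N by lia.
have h3 : ((M.+1 - a) * b.+1 <= M * M)%N by apply: leq_mul.
have -> : ((M * u) ^ 2 = u * (u * (M * M)))%N by ring.
apply: leq_mul => //.
by rewrite -[X in (X <= _)%N]mul1n; apply: leq_mul.
Qed.

Lemma prodbound (a b : 'I_M.+1) :
  sqrtC ((a * (M.+1 - a))%:R) * sqrtC ((b.+1 * (M - b))%:R) <= ((M * (a * (M - b)))%:R : C).
Proof.
rewrite -ler_sqr ?nnegrE ?mulr_ge0 ?sqrtC_ge0 ?ler0n //.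
rewrite exprMn !sqrtCK -natrM -natrX ler_nat.
by apply: natbound; rewrite -ltnS ltn_ord.
Qed.
End H3.

Section H4.
Variable R : realType.
Local Notation C := (R[i]).
Variables (V : finType) (M : nat) (x y : V).
Hypothesis hxy : x != y.
Local Notation J := (spinJ R M).

Lemma S3E (k l : 'I_M.+1) : S3 R M k l = (k == l)%:R * jval R k.
Proof. by rewrite /S3 mxE; case: eqP; rewrite ?mul1r ?mul0r. Qed.

Lemma NlocE (k l : 'I_M.+1) : Nloc R M k l = (k == l)%:R * (J - jval R k).
Proof. by rewrite /Nloc !mxE; case: eqP => [->|]; rewrite ?eqxx ?mulr1n ?mulr0n ?mul1r ?mul0r ?subr0. Qed.

Lemma JsubE (k : 'I_M.+1) : J - jval R k = (M - k)%:R.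
Proof.
rewrite jvalE spinJE natrB; last by rewrite -ltnS ltn_ord.
by field.
Qed.

Definition zz (s : cfg V M) : C := J ^+ 2 - jval R (s x) * jval R (s y).

Lemma ZE (s t : cfg V M) : Zxy R x y s t = (s == t)%:R * zz s.
Proof.
rewrite /Zxy /op_sub /op_scale /op_id mul_loc // !S3E -(@eq_cfg2 V M x y s t) /zz.
by case: (s x == t x); case: (s y == t y); case: (agree2 V M x y s t); rewrite /=; ring.
Qed.

Lemma flipE (s t : cfg V M) : flip R x y s t =
  (Splus R M (s x) (t x) * Sminus R M (s y) (t y) + Sminus R M (s x) (t x) * Splus R M (s y) (t y))
  * (agree2 V M x y s t)%:R.
Proof. by rewrite /flip /op_add !mul_loc //; ring. Qed.

Lemma flip_ge0 (s t : cfg V M) : 0 <= flip R x y s t.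
Proof.
rewrite flipE; apply: mulr_ge0 => //; apply: addr_ge0; apply: mulr_ge0;
by rewrite ?Splus_ge0 ?Sminus_ge0.
Qed.

Lemma flip_sym (s t : cfg V M) : flip R x y s t = flip R x y t s.
Proof. by rewrite !flipE agree2C !Splus_Sminus; ring. Qed.

Lemma flip_row (s : cfg V M) : \sum_t flip R x y s t <= 4 * J * zz s.
Proof.
under eq_bigr do rewrite flipE.
rewrite (sum_agree2 _ _ _ _ _ hxy s (fun k l => Splus R M (s x) k * Sminus R M (s y) l + Sminus R M (s x) k * Splus R M (s y) l)).
under eq_bigr do rewrite big_split /= -!mulr_sumr.
rewrite big_split /= -!mulr_suml rowSplus rowSminus rowSplus rowSminus.
have -> : 4 * J * zz s = (M * ((s x) * (M - s y)))%:R + (M * ((s y) * (M - s x)))%:R.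
  rewrite /zz !jvalE spinJE !natrM !natrB; try by rewrite -ltnS ltn_ord.
  by field.
apply: lerD; first exact: prodbound.
by rewrite mulrC prodbound.
Qed.
End H4.


Theorem mainTheorem2 (R : realType) (M : nat) (Delta : R)
    (V : finType) (e : rel V) (x y : V) :
  (0 < M)%N -> M%:R < Delta -> connected_graph e -> x != y ->
  let J := spinJ R M in
  let D := (Delta%:C)%C in
  let Z := @Zxy R V M x y in
  [/\ op_le (op_scale (- (2 * J / D)) Z) (op_scale (- (1 / (2 * D))) (@flip R V M x y)),
      op_le (op_scale (- (1 / (2 * D))) (@flip R V M x y)) (op_scale (2 * J / D) Z),
      op_le (op_scale (1 - 2 * J / D) Z) (@hxy R V M Delta x y),
      op_le (@hxy R V M Delta x y) (op_scale (1 + 2 * J / D) Z)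
    & op_le (op_scale (1 + 2 * J / D) Z)
            (op_scale ((M%:R / 2) * (1 + M%:R / D))
                      (op_add (loc x (Nloc R M)) (loc y (Nloc R M))))].
Proof.
move=> M0 HD _ nxy J D Z.
have D0 : 0 < D.
  rewrite /D -(rmorph0 (real_complex R)) ltcR; apply: le_lt_trans HD; exact: ler0n.
have J0 : 0 <= J by rewrite /J spinJE divr_ge0 ?ler0n.
have DJ0 : 0 <= 2 * J / D by rewrite divr_ge0 ?mulr_ge0 ?ler0n // ltW.
pose F : Op R V M := fun s t => flip R x y s t / (2 * D).
pose d : cfg V M -> R[i] := fun s => 2 * J / D * zz R V M x y s.
have F0 : forall s t, 0 <= F s t.
  by move=> s t; rewrite /F divr_ge0 ?flip_ge0 ?mulr_ge0 ?ler0n // ltW.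
have Fs : forall s t, F s t = F t s by move=> s t; rewrite /F flip_sym.
have Frow : forall s, \sum_t F s t <= d s.
  move=> s; rewrite /F /d -mulr_suml.
  have -> : 2 * J / D * zz R V M x y s = (4 * J * zz R V M x y s) / (2 * D).
    by field; rewrite lt0r_neq0.
  apply: ler_wpM2r; first by rewrite invr_ge0 mulr_ge0 ?ler0n // ltW.
  exact: flip_row.
have HZ : forall s t, Z s t = (s == t)%:R * zz R V M x y s by move=> s t; exact: (@ZE R V M x y nxy s t).
have Hh : forall s t, hxy Delta x y s t = Z s t - 1 / (2 * D) * flip R x y s t.
  by move=> s t; rewrite /hxy /Z /Zxy /op_sub /op_scale; ring.
split.
- apply: (@schur R V M _ d F (-1)); rewrite ?eqxx ?orbT //.
  by move=> s t; rewrite /op_sub /op_scale HZ /d /F; ring.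
- apply: (@schur R V M _ d F 1); rewrite ?eqxx //.
  by move=> s t; rewrite /op_sub /op_scale HZ /d /F; ring.
- apply: (@schur R V M _ d F (-1)); rewrite ?eqxx ?orbT //.
  by move=> s t; rewrite /op_sub /op_scale Hh HZ /d /F; ring.
- apply: (@schur R V M _ d F 1); rewrite ?eqxx //.
  by move=> s t; rewrite /op_sub /op_scale Hh HZ /d /F; ring.
pose d5 : cfg V M -> R[i] := fun s => (1 + 2 * J / D) * ((M - s x)%:R * (M - s y)%:R).
apply: (@schur R V M _ d5 (fun _ _ => 0) 1); rewrite ?eqxx //.
- move=> s t; rewrite /op_sub /op_scale /op_add HZ.
  rewrite !(loc_diag _ _ _ _ (fun k => J - jval R k)); try by move=> k l; rewrite NlocE.
  rewrite /d5 /zz -!JsubE.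
  have -> : M%:R / 2 = J by rewrite /J spinJE.
  by field; rewrite lt0r_neq0.
- move=> s; rewrite big1 // /d5; apply: mulr_ge0; first by rewrite addr_ge0.
  by rewrite mulr_ge0 ?ler0n.
Qed.
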